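(* Let $k\ge 1$, $n=2k$, and let $C=(c_{ij})$ be a symmetric $n\times n$ relaxed Van der Veen matrix, i.e. \[ c_{j+1,j}+c_{lm}-c_{jl}-c_{j+1,m}\le 0 \] for all $j,l,m$ with $1\le j<j+1<l\le n$, $j+1<m\le n$, $j\equiv m \pmod 2$ and $j+1\equiv l\pmod 2$. Then the even-odd BTSP with distance matrix $C$ is pyramidally solvable, i.e. there is an optimal feasible tour which is pyramidal.
   Context: A tour on $\{1,\ldots,n\}$ is a cyclic permutation $\tau$ of $\{1,\ldots,n\}$; its length is $c(\tau)=\sum_{i=1}^n c_{i\tau(i)}$. In the bipartite TSP (BTSP), given a symmetric $n\times n$ matrix $C$ ($n=2k$) and a partition of the cities into $K_1,K_2$ with $|K_1|=|K_2|=k$, a feasible tour is a tour $\tau$ such that $\tau(i),\tau^{-1}(i)\in K_2$ for all $i\in K_1$ and $\tau(i),\tau^{-1}(i)\in K_1$ for all $i\in K_2$; the goal is a feasible tour of minimum length. The even-odd BTSP is the case $K_1=\{1,3,\ldots,2k-1\}$ and $K_2=\{2,4,\ldots,2k\}$. A tour $\tau=\langle 1,\tau_2,\ldots,\tau_m,n,\tau_{m+2},\ldots,\tau_{n},1\rangle$ (the cyclic sequence of visited cities starting at city 1) is pyramidal if $1<\tau_2<\cdots<\tau_m<n$ and $n>\tau_{m+2}>\cdots>\tau_{n}>1$. An instance is pyramidally solvable if an optimal solution can be found within the set of pyramidal tours. *)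

(* Defs.v *)
(* Cities 1..n are represented by the ordinals 'I_n,
   city number c corresponds to the ordinal c-1. *)
From HB Require Import structures.
From mathcomp Require Import all_boot all_order all_algebra all_fingroup.
Set Implicit Arguments. Unset Strict Implicit. Unset Printing Implicit Defensive.
Import Order.TTheory GRing.Theory Num.Theory.
Local Open Scope ring_scope.

Definition is_tour (n : nat) (t : {perm 'I_n}) : Prop :=
  forall x : 'I_n, porbit t x = [set: 'I_n].

Definition tour_len (R : numDomainType) (n : nat) (C : 'M[R]_n) (t : {perm 'I_n}) : R :=
  \sum_(i < n) C i (t i).

(* Even-odd BTSP feasibility: K1 = odd cities {1,3,..} (= ordinals with even value),
   K2 = even cities. Every city's successor and predecessor lie in the other class. *)
Definition eo_feasible (n : nat) (t : {perm 'I_n}) : Prop :=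
  is_tour t /\
  forall i : 'I_n, odd (t i) != odd i /\ odd ((t^-1)%g i) != odd i.

Definition pyramidal (n : nat) (t : {perm 'I_n}) : Prop :=
  forall z : 'I_n, val z = 0%N ->
  let x (s : nat) : nat := (t ^+ s)%g z in
  exists m : nat, (m < n)%N /\
    (forall s : nat, (s < m)%N -> (x s < x s.+1)%N) /\
    (forall s : nat, (m <= s)%N -> (s.+1 < n)%N -> (x s.+1 < x s)%N).

Definition symmetric_mx (R : Type) (n : nat) (C : 'M[R]_n) : Prop :=
  forall i j, C i j = C j i.

(* Relaxed Van der Veen condition (0-based indices; shifting by one preserves
   all inequalities and parity congruences). j1 plays the role of j+1. *)
Definition relaxed_vdv (R : numDomainType) (n : nat) (C : 'M[R]_n) : Prop :=
  forall j j1 l m : 'I_n,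
    val j1 = (val j).+1 -> (val j1 < val l)%N -> (val j1 < val m)%N ->
    odd j = odd m -> odd j1 = odd l ->
    C j1 j + C l m - C j l - C j1 m <= 0.

(* Main.v *)
Require Import Defs.
From HB Require Import structures.
From mathcomp Require Import all_boot all_order all_algebra all_fingroup.
From mathcomp Require Import zify ring lra.
From Stdlib Require Import Classical.
Set Implicit Arguments. Unset Strict Implicit. Unset Printing Implicit Defensive.
Import Order.TTheory GRing.Theory Num.Theory.
Local Open Scope ring_scope.

Section SeqCost.
Variables (T : eqType) (V : nmodType) (f : T -> T -> V).

Fixpoint pc (x : T) (s : seq T) : V :=
  if s is y :: s' then f x y + pc y s' else 0.
Definition cyc (s : seq T) : V := if s is x :: s' then pc x (rcons s' x) else 0.

Lemma pc_cat x s1 s2 : pc x (s1 ++ s2) = pc x s1 + pc (last x s1) s2.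
Proof.
elim: s1 x => [|y s IH] x /=; first by rewrite add0r.
by rewrite IH addrA.
Qed.

Lemma pc_rcons x s y : pc x (rcons s y) = pc x s + f (last x s) y.
Proof. by rewrite -cats1 pc_cat /= addr0. Qed.

Lemma last_rev_belast (x : T) s : last (last x s) (rev (belast x s)) = x.
Proof. by case: s => [|y s] //=; rewrite rev_cons last_rcons. Qed.

Hypothesis fsym : forall x y, f x y = f y x.

Lemma pc_rev x s : pc (last x s) (rev (belast x s)) = pc x s.
Proof.
elim: s x => [|y s IH] x //=.
by rewrite rev_cons pc_rcons IH last_rev_belast fsym addrC.
Qed.

Lemma rev_lastI (m : T) t : rev (m :: t) = last m t :: rev (belast m t).
Proof. by rewrite {1}(lastI m t) rev_rcons. Qed.

Lemma cyc_exch l t1 b m t3 :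
  cyc (l :: t1 ++ b :: m :: t3) + f b (last m t3) + f m l =
  cyc (l :: t1 ++ b :: rev (m :: t3)) + f b m + f (last m t3) l.
Proof.
rewrite /cyc !rcons_cat !pc_cat rev_lastI /= !pc_rcons pc_rev last_rev_belast.
set A := pc l t1; set B := f (last l t1) b; set P := pc m t3.
rewrite -!addrA; congr (_ + _); congr (_ + _).
rewrite addrCA [RHS]addrCA; congr (_ + _).
by rewrite addrA [RHS]addrA [RHS]addrC.
Qed.

End SeqCost.

Section PermCyc.
Variable n : nat.
Local Notation T := ('I_n).

Definition tl (V : nmodType) (f : T -> T -> V) (s : {perm T}) : V :=
  \sum_(i < n) f i (s i).

Lemma pc_fpath (V : nmodType) (f : T -> T -> V) (g : T -> T) x s :
  fpath g x s -> pc f x s = \sum_(y <- belast x s) f y (g y).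
Proof.
elim: s x => [|y s IH] x /=; first by rewrite big_nil.
move=> /andP[/eqP <- Hp]; by rewrite big_cons IH.
Qed.

Lemma cyc_fcycle (V : nmodType) (f : T -> T -> V) (g : T -> T) s :
  fcycle g s -> cyc f s = \sum_(y <- s) f y (g y).
Proof.
case: s => [|x s] /=; first by rewrite big_nil.
by move=> H; rewrite (@pc_fpath _ f _ _ _ H) belast_rcons.
Qed.

Lemma tl_cyc (V : nmodType) (f : T -> T -> V) (g : {perm T}) s :
  uniq s -> (forall x, x \in s) -> fcycle g s -> tl f g = cyc f s.
Proof.
move=> Us Fs Hc; rewrite (@cyc_fcycle _ f _ _ Hc) big_uniq //.
by apply: eq_bigl => y; rewrite Fs.
Qed.

Lemma tour_cycle (g : {perm T}) z : is_tour g ->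
  [/\ uniq (traject g z n), (forall x, x \in traject g z n) & fcycle g (traject g z n)].
Proof.
move=> Ht.
have Hc : #|porbit g z| = n by rewrite Ht cardsT card_ord.
split.
- by have := uniq_traject_porbit g z; rewrite Hc.
- by move=> x; have := porbit_traject g z x; rewrite Hc Ht in_setT => <-.
have Hi := iter_porbit g z; rewrite Hc in Hi.
have Hn : (0 < n)%N := leq_ltn_trans (leq0n _) (ltn_ord z).
suff H : forall m, (0 < m)%N -> iter m g z = z -> fcycle g (traject g z m) by exact: H.
case=> [|m] // _ {}Hi.
rewrite /= -{3}Hi iterSr -trajectSr.
exact: fpath_traject.
Qed.

Lemma tour_from_cycle (g : {perm T}) s :
  (forall x, x \in s) -> fcycle g s -> is_tour g.
Proof.
case: s => [|x0 s] Fs Hc y; first by have := Fs y.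
have Hall : forall y, y \in porbit g x0.
  move=> u; have := Fs u; rewrite inE => /orP[/eqP ->|Hu]; first exact: porbit_id.
  move: Hc => /= /fpathP[k Hk].
  have : u \in rcons s x0 by rewrite mem_rcons inE Hu orbT.
  rewrite Hk => /trajectP[i _ ->].
  by rewrite -iterSr -permX mem_porbit.
have -> : porbit g y = porbit g x0 by apply/eqP; rewrite eq_porbit_mem.
by apply/setP => u; rewrite in_setT Hall.
Qed.

Definition altp (x y : T) := odd x != odd y.

Lemma feas_of (g : {perm T}) s :
  (forall x, x \in s) -> fcycle g s -> path.cycle altp s -> eo_feasible g.
Proof.
move=> Fs Hc Ha; split; first exact: tour_from_cycle Hc.
have H1 : forall i, odd (g i) != odd i.
  move=> i; have := next_cycle Ha (Fs i); rewrite (nextE Hc (Fs i)).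
  by rewrite /altp eq_sym.
move=> i; split; first exact: H1.
by have := H1 ((g^-1)%g i); rewrite permKV eq_sym.
Qed.

Lemma cycle_alt_of (g : {perm T}) s : eo_feasible g -> fcycle g s -> path.cycle altp s.
Proof.
move=> [_ Hf]; apply: sub_cycle => x y /eqP <-.
by have [H _] := Hf x; rewrite /altp eq_sym.
Qed.

End PermCyc.

Lemma fcycle_split (T : eqType) (g : T -> T) x s1 y w s2 :
  fcycle g (x :: s1 ++ y :: w :: s2) -> g y = w /\ g (last w s2) = x.
Proof.
rewrite /= rcons_cat cat_path /= rcons_path.
by case/and5P => _ _ /eqP -> _ /eqP ->.
Qed.

Lemma fcycle_split0 (T : eqType) (g : T -> T) x s1 y :
  fcycle g (x :: s1 ++ [:: y]) -> g y = x.
Proof. by rewrite /= rcons_cat cat_path /= => /andP[_ /and3P[_ /eqP -> _]]. Qed.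

Lemma cycle_exch (T : eqType) (e : rel T) (esym : forall x y, e x y = e y x)
    l t1 b m t3 :
  path.cycle e (l :: t1 ++ b :: m :: t3) -> e b (last m t3) -> e m l ->
  path.cycle e (l :: t1 ++ b :: rev (m :: t3)).
Proof.
move=> Hc Hba Hml; move: Hc.
rewrite /= !rcons_cat !cat_path rev_lastI /= !rcons_path.
move=> /andP[-> /and3P[-> Hbm /andP[Hp Hl]]] /=.
rewrite Hba /= last_rev_belast Hml andbT.
rewrite rev_path; apply: sub_path Hp => x y; by rewrite esym.
Qed.

Definition D n (i j : 'I_n) : nat := (maxn i j - minn i j)%N.
Definition Phi n (s : {perm 'I_n}) : nat := tl (@D n) s.

Definition fpat n (s : {perm 'I_n}) : Prop :=
  exists a b : 'I_n, [/\ val b = (val a).+1, (val b < s a)%N & (val b < s b)%N].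

Lemma exchange (R : realDomainType) n (C : 'M[R]_n) (g : {perm 'I_n}) :
  symmetric_mx C -> relaxed_vdv C -> eo_feasible g -> fpat g ->
  exists g' : {perm 'I_n}, [/\ eo_feasible g',
     tl (fun i j => C i j) g' <= tl (fun i j => C i j) g & (Phi g' < Phi g)%N].
Proof.
move=> Csym Cvdv Hg [a [b [Hab Hl Hm]]].
have [U0 F0 C0] := tour_cycle a (proj1 Hg).
case: (rot_to (F0 (g a))) => i t Hrot.
have Us : uniq (g a :: t) by rewrite -Hrot rot_uniq.
have Fs : forall x, x \in g a :: t by move=> x; rewrite -Hrot mem_rot.
have Cs : fcycle g (g a :: t) by rewrite -Hrot rot_cycle.
have bt : b \in t.
  have := Fs b; rewrite inE => /orP[/eqP Eb|//].
  by move: Hl; rewrite -Eb ltnn.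
case/splitPr: bt Us Fs Cs => t1 t2 Us Fs Cs.
case: t2 Us Fs Cs => [|m t3] Us Fs Cs.
  have := fcycle_split0 Cs => /perm_inj Eba.
  by move: Hab; rewrite Eba => /n_Sn.
have [Egb Ela] := fcycle_split Cs.
have Ea : last m t3 = a by apply: (perm_inj Ela).
set l := g a in Us Fs Cs Ela Hl.
set w := l :: t1 ++ b :: rev (m :: t3).
have Pw : perm_eq w (l :: t1 ++ b :: m :: t3).
  by rewrite /w perm_cons perm_cat2l perm_cons perm_rev perm_refl.
have Uw : uniq w by rewrite (perm_uniq Pw).
have Fw : forall x, x \in w by move=> x; rewrite (perm_mem Pw).
pose g' := perm (can_inj (prev_next Uw)).
have Cw : fcycle g' w.
  have E : frel g' =2 frel (next w) by move=> x y; rewrite /= /g' permE.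
  by rewrite (eq_cycle E) cycle_next.
have [_ Hf] := Hg.
have oa : odd l = ~~ odd a by have [H _] := Hf a; move: H; case: (odd l); case: (odd a).
have om : odd m = odd a.
  have [H _] := Hf b; move: H; rewrite Egb Hab /=; case: (odd m); case: (odd a).
  by []. by []. by []. by [].
have Aw : path.cycle (@altp n) w.
  apply: cycle_exch.
  - by move=> x y; rewrite /altp eq_sym.
  - exact: cycle_alt_of Hg Cs.
  - by rewrite Ea /altp Hab /=; case: (odd a).
  - by rewrite /altp om oa; case: (odd a).
have Fg' : eo_feasible g' := feas_of Fw Cw Aw.
exists g'; split => //.
- rewrite (tl_cyc _ Uw Fw Cw) (tl_cyc _ Us Fs Cs).
  have E := cyc_exch (f := fun i j => C i j) Csym l t1 b m t3.
  rewrite Ea in E.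
  have h1 : (val b < val m)%N by rewrite -Egb.
  have h2 : odd a = odd m by rewrite om.
  have h3 : odd b = odd l by rewrite Hab /= oa.
  have V' := Cvdv a b l m Hab Hl h1 h2 h3.
  rewrite (Csym l m) in V'.
  move: E V'; rewrite -/w.
  set X := cyc _ w; set Y := cyc _ (l :: _).
  move=> E V'; lra.
- have Dsym : forall x y : 'I_n, D x y = D y x.
    by move=> x y; rewrite /D maxnC minnC.
  rewrite /Phi (tl_cyc _ Uw Fw Cw) (tl_cyc _ Us Fs Cs).
  have E := cyc_exch Dsym l t1 b m t3.
  rewrite Ea -/w in E.
  move: E; set X := cyc _ w; set Y := cyc _ (l :: _).
  rewrite /D -Egb => E.
  have E' : (Y + (maxn b a - minn b a) + (maxn (g b) l - minn (g b) l) =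
     X + (maxn b (g b) - minn b (g b)) + (maxn a l - minn a l))%N := E.
  have Hab' : nat_of_ord b = (nat_of_ord a).+1 := Hab.
  have Hl' : (nat_of_ord b < nat_of_ord l)%N := Hl.
  have Hm' : (nat_of_ord b < nat_of_ord (g b))%N := Hm.
  clear -E' Hab' Hl' Hm'.
  move: E' Hab' Hl' Hm'.
  move: (nat_of_ord a) (nat_of_ord b) (nat_of_ord l) (nat_of_ord (g b)) => va vb vl vm.
  lia.
Qed.

Lemma lemA (X : nat -> nat) n q : (q < n)%N ->
  (forall i j, (i < n)%N -> (j < n)%N -> X i = X j -> i = j) ->
  ((0 < q)%N -> (X q.-1 < X q)%N) -> (q.+1 < n -> X q.+1 < X q)%N ->
  (forall r, (0 < r)%N -> (r.+1 < n)%N -> (X r < X r.-1)%N -> (X r < X r.+1)%N ->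
     (X q < X r)%N) ->
  (forall i, (i < q)%N -> (X i < X i.+1)%N) /\
  (forall i, (q <= i)%N -> (i.+1 < n)%N -> (X i.+1 < X i)%N).
Proof.
move=> Hq Hinj Hl Hr Hmin; split.
- have K : forall d, (d < q)%N -> (X (q - d.+1) < X (q - d))%N /\ (X (q - d) <= X q)%N.
    elim=> [|d IH] Hd.
      by rewrite subn0 subn1; split=> //; apply: Hl; lia.
    have [IH1 IH2] := IH (ltnW Hd).
    set r := (q - d.+1)%N in IH1 IH2 *.
    have Er1 : r.-1 = (q - d.+2)%N by rewrite /r; lia.
    have Er2 : r.+1 = (q - d)%N by rewrite /r; lia.
    split; last by lia.
    case: (ltngtP (X (q - d.+2)%N) (X r)) => // H.
      have := Hmin r ltac:(rewrite /r; lia) ltac:(rewrite /r; lia)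
        ltac:(by rewrite Er1) ltac:(by rewrite Er2).
      lia.
    have := Hinj (q - d.+2)%N r ltac:(lia) ltac:(rewrite /r; lia) H; rewrite /r; lia.
  move=> i Hi; have [H _] := K (q - i.+1)%N ltac:(lia).
  have E1 : (q - (q - i.+1).+1 = i)%N by lia.
  have E2 : (q - (q - i.+1) = i.+1)%N by lia.
  by rewrite E1 E2 in H.
- have K : forall d, (q + d.+1 < n)%N -> (X (q + d.+1) < X (q + d))%N /\ (X (q + d) <= X q)%N.
    elim=> [|d IH] Hd.
      by rewrite addn0 addn1; split=> //; apply: Hr; lia.
    have [IH1 IH2] := IH ltac:(lia).
    set r := (q + d.+1)%N in IH1 IH2 *.
    have Er1 : r.-1 = (q + d)%N by rewrite /r; lia.
    have Er2 : r.+1 = (q + d.+2)%N by rewrite /r; lia.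
    split; last by lia.
    case: (ltngtP (X (q + d.+2)%N) (X r)) => // H.
      have := Hmin r ltac:(rewrite /r; lia) ltac:(rewrite /r; lia)
        ltac:(by rewrite Er1) ltac:(by rewrite Er2).
      lia.
    have := Hinj (q + d.+2)%N r ltac:(lia) ltac:(rewrite /r; lia) H; rewrite /r; lia.
  move=> i Hi Hin; have [H _] := K (i - q)%N ltac:(lia).
  have E1 : (q + (i - q).+1 = i.+1)%N by lia.
  have E2 : (q + (i - q) = i)%N by lia.
  by rewrite E1 E2 in H.
Qed.

Lemma lemB n (g : {perm 'I_n}) :
  eo_feasible g -> ~ fpat g -> ~ fpat (g^-1)%g -> pyramidal g.
Proof.
move=> Hg Nf Nb z Hz /=.
have [U F Cy] := tour_cycle z (proj1 Hg).
have Hc : #|porbit g z| = n by rewrite (proj1 Hg) cardsT card_ord.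
have Hit : iter n g z = z by have := iter_porbit g z; rewrite Hc.
have Hn : (0 < n)%N := leq_ltn_trans (leq0n _) (ltn_ord z).
pose x i := nat_of_ord (iter i g z).
have Hx0 : x 0%N = 0%N by [].
have Hinj : forall i j, (i < n)%N -> (j < n)%N -> x i = x j -> i = j.
  move=> i j Hi Hj /val_inj E.
  have : nth z (traject g z n) i = nth z (traject g z n) j by rewrite !nth_traject.
  by move/eqP; rewrite nth_uniq ?size_traject // => /eqP.
have Hsurj : forall y : 'I_n, exists2 i, (i < n)%N & y = iter i g z.
  by move=> y; have /trajectP[i Hi ->] := F y; exists i.
have Hxlt : forall i, (x i < n)%N by move=> i; exact: ltn_ord.
have HgS : forall i, g (iter i g z) = iter i.+1 g z by [].
have HgV : forall i, (g^-1)%g (iter i.+1 g z) = iter i g z by move=> i; rewrite /= permK.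
have Hwrap : g (iter n.-1 g z) = z by rewrite HgS prednK.
have HwrapV : (g^-1)%g z = iter n.-1 g z by rewrite -{1}Hwrap permK.
have Hpar : forall u : 'I_n, g u != u /\ (g^-1)%g u != u.
  move=> u; have [H1 H2] := (proj2 Hg) u; split.
    by apply: contraNneq H1 => ->.
  by apply: contraNneq H2 => ->.
suff [m [Hm H1 H2]] : exists m, [/\ (m < n)%N,
    (forall s, (s < m)%N -> (x s < x s.+1)%N) &
    (forall s, (m <= s)%N -> (s.+1 < n)%N -> (x s.+1 < x s)%N)].
  exists m; split=> //; split=> [s Hs|s Hs Hs']; rewrite !permX; [exact: H1|exact: H2].
pose lm (r : 'I_n) := [&& (0 < r)%N, (r.+1 < n)%N, (x r < x r.-1)%N & (x r < x r.+1)%N].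
have Key : forall q, (q < n)%N -> (0 < q -> x q.-1 < x q)%N -> (q.+1 < n -> x q.+1 < x q)%N ->
    (forall r : 'I_n, lm r -> (x q < x r)%N) ->
    exists m, [/\ (m < n)%N,
    (forall s, (s < m)%N -> (x s < x s.+1)%N) &
    (forall s, (m <= s)%N -> (s.+1 < n)%N -> (x s.+1 < x s)%N)].
  move=> q Hq Hl Hr Hm; exists q.
  have Hm' : forall r, (0 < r)%N -> (r.+1 < n)%N -> (x r < x r.-1)%N ->
      (x r < x r.+1)%N -> (x q < x r)%N.
    move=> r Hr0 Hr1 Ha Hb; apply: (Hm (Ordinal (ltnW Hr1))).
    by rewrite /lm /= Hr0 Hr1 Ha Hb.
  by have [A1 A2] := lemA Hq Hinj Hl Hr Hm'.
case: (boolP [exists r, lm r]) => [/existsP Hex | Hno]; last first.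
  have Hn1 : (n.-1 < n)%N by lia.
  have [q Hq EA] := Hsurj (Ordinal Hn1).
  have xq : x q = n.-1 by rewrite /x -EA.
  apply: (Key q Hq).
  - move=> Hq0; have := Hxlt q.-1; have : x q.-1 <> x q.
      by move/(Hinj q.-1 q ltac:(lia) Hq); lia.
    lia.
  - move=> Hq1; have := Hxlt q.+1; have : x q.+1 <> x q.
      by move/(Hinj q.+1 q Hq1 Hq); lia.
    lia.
  - by move=> r Hr; case/existsP: Hno; exists r.
have ex : exists v, [exists r, lm r && (x r == v)].
  by case: Hex => r Hr; exists (x r); apply/existsP; exists r; rewrite Hr eqxx.
case: (ex_minnP ex) => y /existsP[r /andP[Hr /eqP Hry]] Hmin.
move: (Hr) => /and4P[Hr0 Hr1 Hra Hrb].
have Hy0 : (0 < y)%N.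
  rewrite -Hry lt0n; apply/eqP => H0.
  have := Hinj r 0%N (ltn_ord r) Hn ltac:(by rewrite H0); lia.
have Ha : (y.-1 < n)%N by have := Hxlt r; lia.
have [q Hq EA] := Hsurj (Ordinal Ha).
have xq : x q = y.-1 by rewrite /x -EA.
set A := iter q g z in EA.
set B := iter r g z.
have vA : val A = y.-1 by [].
have vB : val B = y by [].
have HAB : val B = (val A).+1 by rewrite vA vB; lia.
have gB : g B = iter r.+1 g z by [].
have gVB : (g^-1)%g B = iter r.-1 g z by rewrite /B -{1}(prednK Hr0) HgV.
have HgA : (val (g A) < y.-1)%N.
  have h1 : ~~ (val B < val (g A))%N.
    apply/negP => H; apply: Nf; exists A, B; split => //.
  have h2 : val (g A) != y.
    apply/eqP => E; have E' : g A = B by apply: val_inj; rewrite E.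
    have : A = iter r.-1 g z by rewrite -gVB -E' permK.
    move/(congr1 (@nat_of_ord n)); rewrite -/(x r.-1) -/(x q) xq; lia.
  have h3 : val (g A) != val A by have [h _] := Hpar A; apply: contra h => /eqP /val_inj ->.
  move: h1 h2 h3; rewrite vA vB; lia.
have HgVA : (val ((g^-1)%g A) < y.-1)%N.
  have h1 : ~~ (val B < val ((g^-1)%g A))%N.
    apply/negP => H; apply: Nb; exists A, B; split => //.
    by rewrite gVB vB -Hry.
  have h2 : val ((g^-1)%g A) != y.
    apply/eqP => E; have E' : (g^-1)%g A = B by apply: val_inj; rewrite E.
    have : A = iter r.+1 g z by rewrite -gB -E' permKV.
    move/(congr1 (@nat_of_ord n)); rewrite -/(x r.+1) -/(x q) xq; lia.
  have h3 : val ((g^-1)%g A) != val A.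
    by have [_ h] := Hpar A; apply: contra h => /eqP /val_inj ->.
  move: h1 h2 h3; rewrite vA vB; lia.
have Hq0 : (0 < q)%N.
  rewrite lt0n; apply/eqP => Eq; move: HgA; rewrite -xq Eq Hx0; lia.
apply: (Key q Hq).
- move=> _; have : (g^-1)%g A = iter q.-1 g z by rewrite /A -{1}(prednK Hq0) HgV.
  move/(congr1 (@nat_of_ord n)); rewrite -/(x q.-1) => <-; rewrite xq; exact: HgVA.
- by move=> _; rewrite xq; exact: HgA.
- move=> r' Hr'; rewrite xq.
  have : (y <= x r')%N by apply: Hmin; apply/existsP; exists r'; rewrite Hr' eqxx.
  lia.
Qed.

Lemma tl_inv (V : nmodType) n (f : 'I_n -> 'I_n -> V) (fsym : forall x y, f x y = f y x)
   (g : {perm 'I_n}) : tl f (g^-1)%g = tl f g.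
Proof.
rewrite /tl (reindex_inj (@perm_inj _ g)) /=.
by apply: eq_bigr => i _; rewrite permK fsym.
Qed.

Lemma feas_inv n (g : {perm 'I_n}) : eo_feasible g -> eo_feasible (g^-1)%g.
Proof.
move=> [Ht Hf]; split; first by move=> x; rewrite porbitV.
by move=> i; have [h1 h2] := Hf i; split; [exact: h2 | rewrite invgK].
Qed.

Lemma descent (R : realDomainType) n (C : 'M[R]_n) :
  symmetric_mx C -> relaxed_vdv C -> forall N (g : {perm 'I_n}),
  eo_feasible g -> (Phi g < N)%N ->
  exists t, [/\ eo_feasible t, pyramidal t & tl (fun i j => C i j) t <= tl (fun i j => C i j) g].
Proof.
move=> Csym Cvdv; elim=> // N IH g Hg HN.
have Dsym : forall x y : 'I_n, D x y = D y x by move=> x y; rewrite /D maxnC minnC.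
case: (classic (fpat g)) => [Hp|Nf].
  have [g' [Hg' Hl Hphi]] := exchange Csym Cvdv Hg Hp.
  have [t [Ht Pt Lt]] := IH g' Hg' ltac:(lia).
  by exists t; split => //; apply: le_trans Lt Hl.
case: (classic (fpat (g^-1)%g)) => [Hp|Nb].
  have [g' [Hg' Hl Hphi]] := exchange Csym Cvdv (feas_inv Hg) Hp.
  rewrite tl_inv // in Hl; rewrite /Phi tl_inv // -/(Phi g) -/(Phi g') in Hphi.
  have [t [Ht Pt Lt]] := IH g' Hg' ltac:(lia).
  by exists t; split => //; apply: le_trans Lt Hl.
by exists g; split => //; apply: lemB.
Qed.

Definition altn (x y : nat) := odd x != odd y.

Lemma path_map_val n (x : 'I_n) s :
  path (@altp n) x s = path altn (val x) (map val s).
Proof. by elim: s x => [|y s IH] x //=; rewrite IH. Qed.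

Lemma path_iota x k : path altn x (iota x.+1 k).
Proof.
elim: k x => [|k IH] x //=; rewrite IH andbT /altn /=.
by case: (odd x).
Qed.

Lemma last_iota x k : last x (iota x.+1 k) = (x + k)%N.
Proof. by elim: k x => [|k IH] x /=; [rewrite addn0 | rewrite IH addnS]. Qed.

Lemma init_tour n : (0 < n)%N -> ~~ odd n -> exists g : {perm 'I_n}, eo_feasible g.
Proof.
move=> Hn Hev.
have Uw := enum_uniq 'I_n.
pose g := perm (can_inj (prev_next Uw)).
exists g.
have Cw : fcycle g (enum 'I_n).
  have E : frel g =2 frel (next (enum 'I_n)) by move=> x y; rewrite /= /g permE.
  by rewrite (eq_cycle E) cycle_next.
apply: (feas_of (s := enum 'I_n)) => //; first by move=> x; rewrite mem_enum.
have E := val_enum_ord n.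
suff : path.cycle altn (iota 0 n).
  case: (enum 'I_n) E => [|x s] //= <-.
  by rewrite path_map_val map_rcons.
case: n {Uw g Cw E} Hn Hev => [|m] //= _ Hev.
rewrite rcons_path path_iota last_iota /altn /= add0n.
by move: Hev; case: (odd m).
Qed.

Lemma feasbP n (g : {perm 'I_n}) : reflect (eo_feasible g)
  ([forall x, porbit g x == setT] &&
   [forall i, (odd (g i) != odd i) && (odd ((g^-1)%g i) != odd i)]).
Proof.
apply: (iffP andP) => [[/forallP H1 /forallP H2] | [H1 H2]].
  split; first by move=> x; apply/eqP.
  by move=> i; have /andP[] := H2 i.
split; first by apply/forallP => x; apply/eqP.
by apply/forallP => i; have [-> ->] := H2 i.
Qed.

Unset Implicit Arguments.
Set Strict Implicit.

Theorem corollary3p3 (R : realDomainType) (k : nat) (C : 'M[R]_(k.*2)) :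
  (0 < k)%N -> symmetric_mx C -> relaxed_vdv C ->
  exists tau : {perm 'I_(k.*2)},
    eo_feasible tau /\ pyramidal tau /\
    forall sigma : {perm 'I_(k.*2)}, eo_feasible sigma ->
      tour_len C tau <= tour_len C sigma.
Proof.
move=> Hk Csym Cvdv.
have [g0 Hg0] : exists g : {perm 'I_(k.*2)}, eo_feasible g.
  by apply: init_tour; [rewrite double_gt0 | rewrite odd_double].
case: (@arg_minP _ _ _ g0 (fun g => [forall x, porbit g x == setT] &&
   [forall i, (odd (g i) != odd i) && (odd ((g^-1)%g i) != odd i)])
   (tl (fun i j => C i j)) (introT (feasbP g0) Hg0)) => g1 /feasbP Hg1 Hmin.
have [t [Ht Pt Lt]] := descent Csym Cvdv (N := (Phi g1).+1) Hg1 (ltnSn _).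
exists t; split => //; split => // s Hs.
apply: (le_trans Lt); apply: Hmin; exact/feasbP.
Qed.
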